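(* There is no semi-equivelar map of type $(3^2,4,3,6)$ (triangle, triangle, quadrilateral, triangle, hexagon around each vertex, in this cyclic order) on the closed surface of Euler characteristic $-1$. *)

(* Defs.v *)
From HB Require Import structures.
From mathcomp Require Import all_boot all_order all_algebra.
Set Implicit Arguments. Unset Strict Implicit. Unset Printing Implicit Defensive.

Section Maps.
Variable V : finType.
(* A map is given by its finite vertex type V and its list of faces F;
   each face is a cyclic sequence of distinct vertices (its boundary cycle). *)
Variable F : seq (seq V).

Definition face (i : nat) : seq V := nth [::] F i.

Definition face_edge (f : seq V) (x y : V) : bool :=
  [&& x \in f, y \in f & (next f x == y) || (next f y == x)].

Definition map_adj (x y : V) : bool := has (fun f => face_edge f x y) F.

Definition map_edges : {set {set V}} :=
  [set [set p.1; p.2] | p : V * V & map_adj p.1 p.2].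

Definition share_edge_at (v : V) (f g : seq V) : bool :=
  has (fun u => face_edge f v u && face_edge g v u) f.

Definition faces_meet_properly (f g : seq V) : Prop :=
  let I := [seq x <- f | x \in g] in
  size I <= 1 \/
  (size I = 2 /\ forall x y, x \in I -> y \in I -> x != y ->
                   face_edge f x y /\ face_edge g x y).

Definition face_cycle_of_type (v : V) (typ : seq nat) : Prop :=
  exists s : seq nat,
    [/\ uniq s /\ size s = size typ,
        (forall i, i \in s -> i < size F /\ v \in face i),
        (forall i, i < size F -> v \in face i -> i \in s),
        (forall k, k < size s ->
           share_edge_at v (face (nth 0 s k)) (face (nth 0 s (k.+1 %% size s)))) &
        exists r, [seq size (face i) | i <- s] = rot r typ \/
                  [seq size (face i) | i <- s] = rot r (rev typ)].

Definition semi_equivelar_map (typ : seq nat) : Prop :=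
  [/\ (forall f, f \in F -> uniq f /\ 3 <= size f),
      (forall i j, i < size F -> j < size F -> i != j ->
         faces_meet_properly (face i) (face j)),
      (forall x y, map_adj x y -> count (fun f => face_edge f x y) F = 2),
      (forall x y : V, connect map_adj x y) &
      (forall v : V, face_cycle_of_type v typ)].

Definition euler_char : int := (#|V|%:Z - #|map_edges|%:Z + (size F)%:Z)%R.
End Maps.

(* Main.v *)
Require Import Defs.
From HB Require Import structures.
From mathcomp Require Import all_boot all_order all_algebra.
From mathcomp Require Import all_fingroup zify.
Set Implicit Arguments. Unset Strict Implicit. Unset Printing Implicit Defensive.

Section Gen.
Variable T : finType.
Implicit Types (f : seq T) (x y a b : T).

Lemma next_inj f : uniq f -> injective (next f).
Proof. by move=> Uf; apply: (can_inj (prev_next Uf)). Qed.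

Lemma next_fix f x : uniq f -> x \in f -> next f x = x -> size f <= 1.
Proof.
move=> Uf xf; case: (rot_to xf) => i q Dq.
rewrite -(next_rot i Uf) Dq -(size_rot i) Dq.
have : uniq (x :: q) by rewrite -Dq rot_uniq.
case: q {Dq} => [|a q] //= /andP[]; rewrite inE negb_or => /andP[xa _] _.
by rewrite eqxx => ax; rewrite ax eqxx in xa.
Qed.

Lemma next_2cyc f x : uniq f -> x \in f -> next f (next f x) = x -> size f <= 2.
Proof.
move=> Uf xf; case: (rot_to xf) => i q Dq.
rewrite -!(next_rot i Uf) Dq -(size_rot i) Dq.
have : uniq (x :: q) by rewrite -Dq rot_uniq.
case: q {Dq} => [|a [|b q]] //= /andP[]; rewrite !inE !negb_or.
case/and3P=> xa xb _ /and3P[/andP[ab _] _ _].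
rewrite eqxx /= (eq_sym a x) (negbTE xa) eqxx => bx.
by rewrite bx eqxx in xb.
Qed.

Lemma fe_sym f x y : face_edge f x y = face_edge f y x.
Proof. by rewrite /face_edge andbCA orbC. Qed.

Lemma fe_mem f x y : face_edge f x y -> (x \in f) && (y \in f).
Proof. by case/and3P=> -> ->. Qed.

Lemma fe_irr f x : uniq f -> 2 <= size f -> face_edge f x x = false.
Proof.
move=> Uf sf; apply/negP => /and3P[xf _]; rewrite orbb => /eqP /(next_fix Uf xf).
by rewrite leqNgt sf.
Qed.

Lemma two_nbrs f x a b y : uniq f -> a != b ->
  face_edge f x a -> face_edge f x b -> face_edge f x y -> y = a \/ y = b.
Proof.
move=> Uf ab /and3P[_ _ ha] /and3P[_ _ hb] /and3P[_ _ hy].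
have ni := next_inj Uf.
move: ha hb hy => /orP[] /eqP ha /orP[] /eqP hb /orP[] /eqP hy.
all: move/eqP: ab => ab.
all: first [ by left; congruence | by right; congruence | by exfalso; apply ab; congruence
  | by exfalso; apply ab; apply ni; congruence | by left; apply ni; congruence
  | by right; apply ni; congruence ].
Qed.


Lemma fe_nextP f x a : face_edge f x a -> next f x = a \/ next f a = x.
Proof. by case/and3P=> _ _ /orP[] /eqP; [left|right]. Qed.

Lemma tri_edge f x y : uniq f -> size f = 3 -> x \in f -> y \in f -> x != y ->
  face_edge f x y.
Proof.
move=> Uf sf xf yf xy; rewrite /face_edge xf yf /=.
case: (rot_to xf) => i q Dq.
rewrite -!(next_rot i Uf) Dq.
have : uniq (x :: q) by rewrite -Dq rot_uniq.
have : size (x :: q) = 3 by rewrite -Dq size_rot.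
have : y \in x :: q by rewrite -Dq mem_rot.
case: q {Dq} => [|a [|b [|c q]]] //= ; rewrite !inE => hy _.
rewrite negb_or => /and3P[/andP[xa xb] ab _].
rewrite eqxx /=.
move: hy; rewrite (eq_sym y x) (negbTE xy) /= => /orP[] /eqP ->.
  by rewrite eqxx.
by apply/orP; right; rewrite (eq_sym b a) (negbTE ab) eqxx /= eqxx.
Qed.
End Gen.


Section Orb.
Local Open Scope group_scope.
Variable T : finType.
Implicit Types (s : {perm T}) (c : seq T).

Lemma porbit_eq_card s x c : uniq c -> porbit s x =i c -> #|porbit s x| = size c.
Proof. by move=> Uc E; rewrite (eq_card E); apply/card_uniqP. Qed.

Lemma orbit_next s c x : uniq c -> (forall w, w \in c -> s w = next c w) ->
  x \in c -> #|porbit s x| = size c.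
Proof.
move=> Uc Hs xc.
have It : forall i, iter i s x = iter i (next c) x /\ iter i (next c) x \in c.
  elim=> [|i [IH1 IH2]] /=; first by split.
  by split; [rewrite IH1 Hs | rewrite mem_next].
apply: porbit_eq_card => // y; apply/idP/idP => [/porbitP[i ->]|yc].
  by rewrite permX; case: (It i) => ->.
have : fconnect (next c) x y by rewrite (fconnect_cycle (cycle_next Uc) xc).
move/iter_findex => <-; apply/porbitP; exists (findex (next c) x y).
by rewrite permX; case: (It (findex (next c) x y)).
Qed.

Definition cyc_hyp s c := forall w, w \in c ->
  (s w = next c w /\ next c (s^-1 w) = w) \/ (next c (s w) = w /\ s^-1 w = next c w).

Lemma propagate s c x : uniq c -> 2 < size c -> cyc_hyp s c -> x \in c ->
  s x = next c x -> forall w, w \in c -> s w = next c w.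
Proof.
move=> Uc sc H xc sx w wc.
have : fconnect (next c) x w by rewrite (fconnect_cycle (cycle_next Uc) xc).
move/iter_findex => <-; elim: (findex _ x w) => [|n IH] //=.
set w' := iter n (next c) x in IH *.
have w'c : w' \in c by rewrite /w'; elim: (n) => //= m IHm; rewrite mem_next.
have uc : next c w' \in c by rewrite mem_next.
case: (H _ uc) => [[]//|[_ h2]].
have : s^-1 (next c w') = w' by rewrite -IH permK.
rewrite h2 => e.
have := next_2cyc Uc w'c e; by rewrite leqNgt sc.
Qed.

Lemma orbit_cycle s c x : uniq c -> 2 < size c -> cyc_hyp s c -> x \in c ->
  #|porbit s x| = size c.
Proof.
move=> Uc sc H xc.
case: (H x xc) => [[h1 _]|[_ h2]].
  by apply: orbit_next => //; apply: propagate h1.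
have H' : cyc_hyp s^-1 c.
  move=> w wc; rewrite invgK; case: (H w wc) => [[a b]|[a b]]; [right|left]; by split.
rewrite -(porbitV s x).
apply: orbit_next => //; apply: propagate h2 => //.
Qed.

Lemma orbit_inv s x : s x != x -> s (s x) = x -> #|porbit s x| = 2.
Proof.
move=> sx ssx.
apply: (@porbit_eq_card s x [:: x; s x]); first by rewrite /= inE eq_sym sx.
move=> y; apply/idP/idP => [/porbitP[i ->]|].
  rewrite permX; elim: i => [|i IH] /=; first by rewrite inE eqxx.
  by move: IH; rewrite !inE => /orP[] /eqP ->; rewrite ?ssx eqxx ?orbT.
rewrite !inE => /orP[] /eqP ->; apply/porbitP; first by exists 0; rewrite expg0 perm1.
by exists 1%N; rewrite expg1.
Qed.

Lemma card_porbits_const s k : (forall x, #|porbit s x| = k) ->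
  #|T| = (#|porbits s| * k)%N.
Proof.
move=> Hk.
rewrite -[in LHS]sum1_card (partition_big_imset (porbit s)) /= -sum_nat_const.
apply: eq_bigr => X /imsetP[y _ ->].
rewrite -(Hk y) -sum1_card; apply: eq_bigl => x; rewrite eq_porbit_mem.
by [].
Qed.

Lemma odd_perm_const s k : 0 < k -> (forall x, #|porbit s x| = k) ->
  odd_perm s = odd #|T| (+) odd (#|T| %/ k).
Proof. by move=> k0 Hk; rewrite /odd_perm (card_porbits_const Hk) mulnK. Qed.
End Orb.


Definition szs := [:: 6; 3; 3; 4; 3].
Definition sc (k : nat) := if k == 4 then 0 else k.+1.
Definition pr (k : nat) := if k == 0 then 4 else k.-1.

Section Main.
Variable V : finType.
Variable F : seq (seq V).
Hypothesis HF : forall f, f \in F -> uniq f /\ 3 <= size f.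
Hypothesis Hcnt : forall x y, map_adj F x y -> count (fun f => face_edge f x y) F = 2.
Hypothesis Hcyc : forall v, face_cycle_of_type F v [:: 3; 3; 4; 3; 6].

Local Notation fc := (face F).

Lemma fcP i : i < size F -> uniq (fc i) /\ 3 <= size (fc i).
Proof. by move=> hi; apply: HF; apply: mem_nth. Qed.

Lemma shareP v (f g : seq V) : share_edge_at v f g -> exists u, face_edge f v u /\ face_edge g v u.
Proof. by case/hasP => u _ /andP[]; exists u. Qed.

Lemma share_sym v (f g : seq V) : share_edge_at v f g -> share_edge_at v g f.
Proof.
case/shareP => u [h1 h2]; apply/hasP; exists u; first by case/andP: (fe_mem h2) => _.
by rewrite h1 h2.
Qed.

Definition chartb v (fs : seq nat) : bool :=
  [&& size fs == 5, uniq fs,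
      all (fun i => (i < size F) && (v \in fc i)) fs,
      all (fun i => (v \in fc i) ==> (i \in fs)) (iota 0 (size F)),
      map (fun i => size (fc i)) fs == szs &
      all (fun k => share_edge_at v (fc (nth 0 fs k)) (fc (nth 0 fs (sc k)))) (iota 0 5)].

Lemma chart_ex v : exists fs, chartb v fs.
Proof.
case: (Hcyc v) => s [[Us ss] Hin Hall Hsh [r Hr]].
have Hsh' : forall k, k < 5 -> share_edge_at v (fc (nth 0 s k)) (fc (nth 0 s (sc k))).
  move=> k hk; have := Hsh k; rewrite ss => /(_ hk).
  by case: k hk => [|[|[|[|[|k]]]]].
have Hsym : forall k, k < 5 -> share_edge_at v (fc (nth 0 s (sc k))) (fc (nth 0 s k)).
  by move=> k hk; apply: share_sym; apply: Hsh'.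
have G : forall fs, perm_eq fs s ->
   map (fun i => size (fc i)) fs = szs ->
   all (fun k => share_edge_at v (fc (nth 0 fs k)) (fc (nth 0 fs (sc k)))) (iota 0 5) ->
   exists fs, chartb v fs.
  move=> fs pfs Hsz Hsh2; exists fs.
  have c1 : size fs == 5 by rewrite (perm_size pfs) ss.
  have c2 : uniq fs by rewrite (perm_uniq pfs).
  have c3 : all (fun i => (i < size F) && (v \in fc i)) fs.
    by apply/allP => i; rewrite (perm_mem pfs) => /Hin [-> ->].
  have c4 : all (fun i => (v \in fc i) ==> (i \in fs)) (iota 0 (size F)).
    apply/allP => i; rewrite mem_iota add0n => /andP[_ hi]; apply/implyP => hv.
    by rewrite (perm_mem pfs); apply: Hall.
  by rewrite /chartb c1 c2 c3 c4 Hsz eqxx Hsh2.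
have S0 := Hsh' 0 isT; have S1 := Hsh' 1 isT; have S2 := Hsh' 2 isT.
have S3 := Hsh' 3 isT; have S4 := Hsh' 4 isT.
have R0 := Hsym 0 isT; have R1 := Hsym 1 isT; have R2 := Hsym 2 isT.
have R3 := Hsym 3 isT; have R4 := Hsym 4 isT.
clear Hsh Hsh' Hsym.
move: G S0 S1 S2 S3 S4 R0 R1 R2 R3 R4 Hr.
clear Us Hin Hall.
case: s ss => [|s0 [|s1 [|s2 [|s3 [|s4 [|? ?]]]]]]; try discriminate.
move=> _ G S0 S1 S2 S3 S4 R0 R1 R2 R3 R4.
move: S0 S1 S2 S3 S4 R0 R1 R2 R3 R4 => /= S0 S1 S2 S3 S4 R0 R1 R2 R3 R4.
case: r => [|[|[|[|[|r]]]]]; last (rewrite rot_oversize; last by []).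
all: case=> [[h0 h1 h2 h3 h4]|[h0 h1 h2 h3 h4]].
all: first [ (apply: (G (rot 0 [:: s0; s1; s2; s3; s4])); [by rewrite perm_rot | by rewrite /= h0 h1 h2 h3 h4 | by rewrite /= ?S0 ?S1 ?S2 ?S3 ?S4 ?R0 ?R1 ?R2 ?R3 ?R4])
  | (apply: (G (rot 0 (rev [:: s0; s1; s2; s3; s4]))); [by rewrite perm_rot perm_rev | by rewrite /= h0 h1 h2 h3 h4 | by rewrite /= ?S0 ?S1 ?S2 ?S3 ?S4 ?R0 ?R1 ?R2 ?R3 ?R4])
  | (apply: (G (rot 1 [:: s0; s1; s2; s3; s4])); [by rewrite perm_rot | by rewrite /= h0 h1 h2 h3 h4 | by rewrite /= ?S0 ?S1 ?S2 ?S3 ?S4 ?R0 ?R1 ?R2 ?R3 ?R4])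
  | (apply: (G (rot 1 (rev [:: s0; s1; s2; s3; s4]))); [by rewrite perm_rot perm_rev | by rewrite /= h0 h1 h2 h3 h4 | by rewrite /= ?S0 ?S1 ?S2 ?S3 ?S4 ?R0 ?R1 ?R2 ?R3 ?R4])
  | (apply: (G (rot 2 [:: s0; s1; s2; s3; s4])); [by rewrite perm_rot | by rewrite /= h0 h1 h2 h3 h4 | by rewrite /= ?S0 ?S1 ?S2 ?S3 ?S4 ?R0 ?R1 ?R2 ?R3 ?R4])
  | (apply: (G (rot 2 (rev [:: s0; s1; s2; s3; s4]))); [by rewrite perm_rot perm_rev | by rewrite /= h0 h1 h2 h3 h4 | by rewrite /= ?S0 ?S1 ?S2 ?S3 ?S4 ?R0 ?R1 ?R2 ?R3 ?R4])
  | (apply: (G (rot 3 [:: s0; s1; s2; s3; s4])); [by rewrite perm_rot | by rewrite /= h0 h1 h2 h3 h4 | by rewrite /= ?S0 ?S1 ?S2 ?S3 ?S4 ?R0 ?R1 ?R2 ?R3 ?R4])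
  | (apply: (G (rot 3 (rev [:: s0; s1; s2; s3; s4]))); [by rewrite perm_rot perm_rev | by rewrite /= h0 h1 h2 h3 h4 | by rewrite /= ?S0 ?S1 ?S2 ?S3 ?S4 ?R0 ?R1 ?R2 ?R3 ?R4])
  | (apply: (G (rot 4 [:: s0; s1; s2; s3; s4])); [by rewrite perm_rot | by rewrite /= h0 h1 h2 h3 h4 | by rewrite /= ?S0 ?S1 ?S2 ?S3 ?S4 ?R0 ?R1 ?R2 ?R3 ?R4])
  | (apply: (G (rot 4 (rev [:: s0; s1; s2; s3; s4]))); [by rewrite perm_rot perm_rev | by rewrite /= h0 h1 h2 h3 h4 | by rewrite /= ?S0 ?S1 ?S2 ?S3 ?S4 ?R0 ?R1 ?R2 ?R3 ?R4]) ].
Qed.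


Definition ch v := xchoose (chart_ex v).
Definition fa v k := nth 0 (ch v) k.

Lemma chP v : [/\ size (ch v) = 5, uniq (ch v),
      all (fun i => (i < size F) && (v \in fc i)) (ch v),
      map (fun i => size (fc i)) (ch v) = szs /\
      all (fun k => share_edge_at v (fc (nth 0 (ch v) k)) (fc (nth 0 (ch v) (sc k)))) (iota 0 5) &
      all (fun i => (v \in fc i) ==> (i \in ch v)) (iota 0 (size F))].
Proof.
have := xchooseP (chart_ex v); rewrite /chartb -/(ch v).
by case/and3P=> /eqP c1 c2 /and4P[c3 c4 /eqP c5 c6].
Qed.

Lemma fa_lt v k : k < 5 -> fa v k < size F.
Proof.
move=> hk; case: (chP v) => s5 _ /allP c3 _ _.
have hk' : k < size (ch v) by rewrite s5.
by case/andP: (c3 _ (mem_nth 0 hk')).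
Qed.

Lemma fa_in v k : k < 5 -> v \in fc (fa v k).
Proof.
move=> hk; case: (chP v) => s5 _ /allP c3 _ _.
have hk' : k < size (ch v) by rewrite s5.
by case/andP: (c3 _ (mem_nth 0 hk')).
Qed.

Lemma fa_sz v k : k < 5 -> size (fc (fa v k)) = nth 0 szs k.
Proof.
move=> hk; case: (chP v) => s5 _ _ [c5 _] _.
by rewrite -c5 (nth_map 0) // s5.
Qed.

Lemma fa_inj v j k : j < 5 -> k < 5 -> fa v j = fa v k -> j = k.
Proof.
move=> hj hk e; case: (chP v) => s5 u _ _ _.
by apply/eqP; rewrite -(nth_uniq 0 _ _ u) ?s5 //; move: e; rewrite /fa => ->.
Qed.

Lemma fa_all v i : i < size F -> v \in fc i -> exists2 k, k < 5 & i = fa v k.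
Proof.
move=> hi hv; case: (chP v) => s5 _ _ _ /allP c4.
have : i \in ch v by have := c4 i; rewrite mem_iota add0n hi hv => /(_ isT).
move=> ich; exists (index i (ch v)); first by rewrite -s5 index_mem.
by rewrite /fa nth_index.
Qed.

Lemma fa_share v k : k < 5 -> share_edge_at v (fc (fa v k)) (fc (fa v (sc k))).
Proof.
move=> hk; case: (chP v) => _ _ _ [_ /allP c6] _.
by apply: c6; rewrite mem_iota.
Qed.


Lemma sc_lt k : k < 5 -> sc k < 5. Proof. by case: k => [|[|[|[|[|]]]]]. Qed.
Lemma pr_lt k : k < 5 -> pr k < 5. Proof. by case: k => [|[|[|[|[|]]]]]. Qed.
Lemma sc_pr k : k < 5 -> sc (pr k) = k. Proof. by case: k => [|[|[|[|[|]]]]]. Qed.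
Lemma pr_neq k : k < 5 -> pr k != k. Proof. by case: k => [|[|[|[|[|]]]]]. Qed.

Definition nb v k :=
  let f := fc (fa v k) in let g := fc (fa v (sc k)) in
  nth v f (find (fun u => face_edge f v u && face_edge g v u) f).

Lemma nb_edge v k : k < 5 ->
  face_edge (fc (fa v k)) v (nb v k) /\ face_edge (fc (fa v (sc k))) v (nb v k).
Proof.
move=> hk; have := fa_share v hk; rewrite /share_edge_at => /(nth_find v).
by rewrite /nb => /andP[].
Qed.

Lemma fe_adj i x y : i < size F -> face_edge (fc i) x y -> map_adj F x y.
Proof. by move=> hi h; apply/hasP; exists (fc i) => //; apply: mem_nth. Qed.

Lemma count3 (P : pred (seq V)) i1 i2 i3 : i1 < size F -> i2 < size F -> i3 < size F ->
  uniq [:: i1; i2; i3] -> P (fc i1) -> P (fc i2) -> P (fc i3) -> 3 <= count P F.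
Proof.
move=> h1 h2 h3 U p1 p2 p3.
rewrite -[F in count _ F](mkseq_nth [::] F) /mkseq count_map -size_filter.
have -> : 3 = size [:: i1; i2; i3] by [].
apply: (uniq_leq_size U) => i; rewrite !inE mem_filter mem_iota add0n.
by case/or3P => /eqP ->; apply/andP; split.
Qed.

Lemma three_faces v u a b c : face_edge (fc (fa v a)) v u -> face_edge (fc (fa v b)) v u ->
  face_edge (fc (fa v c)) v u -> a < 5 -> b < 5 -> c < 5 -> uniq [:: a; b; c] -> False.
Proof.
move=> e1 e2 e3 ha hb hc U.
have := Hcnt (fe_adj (fa_lt v ha) e1).
have : 3 <= count (fun f => face_edge f v u) F.
  apply: (count3 (fa_lt v ha) (fa_lt v hb) (fa_lt v hc)) => //.
  move: U; rewrite /= !inE !negb_or => /andP[/andP[ab ac] /andP[bc _]].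
  have n1 : fa v a != fa v b by apply/negP => /eqP/(fa_inj ha hb) E; rewrite E eqxx in ab.
  have n2 : fa v a != fa v c by apply/negP => /eqP/(fa_inj ha hc) E; rewrite E eqxx in ac.
  have n3 : fa v b != fa v c by apply/negP => /eqP/(fa_inj hb hc) E; rewrite E eqxx in bc.
  by rewrite n1 n2 n3.
by move=> h E; rewrite E in h.
Qed.

Lemma nb_inj v j k : j < 5 -> k < 5 -> nb v j = nb v k -> j = k.
Proof.
move=> hj hk e.
have [E3 E4] := nb_edge v hk; have [E1 E2] := nb_edge v hj.
rewrite -e in E3 E4.
move: E1 E2 E3 E4.
case: j hj {e} => [|[|[|[|[|]]]]] // _; case: k hk => [|[|[|[|[|]]]]] // _.
all: move=> E1 E2 E3 E4; try reflexivity; exfalso.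
all: first [ by apply: (three_faces E1 E2 E3) | by apply: (three_faces E1 E2 E4) ].
Qed.

Lemma fcU i : i < size F -> uniq (fc i). Proof. by case/fcP. Qed.
Lemma fcS i : i < size F -> 2 <= size (fc i). Proof. by case/fcP => _ /ltnW. Qed.

Lemma nb_ne v k : k < 5 -> nb v k != v.
Proof.
move=> hk; have [E _] := nb_edge v hk; apply/eqP => e; rewrite e in E.
by rewrite fe_irr ?fcU ?fcS ?fa_lt in E.
Qed.

Lemma edgeE v i y : i < size F -> face_edge (fc i) v y ->
  exists2 k, k < 5 & i = fa v k /\ (y = nb v k \/ y = nb v (pr k)).
Proof.
move=> hi e; have /andP[vi _] := fe_mem e.
case: (fa_all hi vi) => k hk Ei; exists k => //; split => //.
have [E1 _] := nb_edge v hk; have [_ E2] := nb_edge v (pr_lt hk).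
rewrite sc_pr // -Ei in E2; rewrite -Ei in E1.
apply: (two_nbrs (fcU hi) _ E1 E2 e).
by apply/negP => /eqP/(nb_inj hk (pr_lt hk)) E; have := pr_neq hk; rewrite -{1}E eqxx.
Qed.


Lemma sc_neq k : k < 5 -> sc k != k. Proof. by case: k => [|[|[|[|[|]]]]]. Qed.
Lemma pr_sc k : k < 5 -> pr (sc k) = k. Proof. by case: k => [|[|[|[|[|]]]]]. Qed.

Definition ety x y := \sum_(i < size F | face_edge (fc i) x y) size (fc i).
Definition etys := [:: 9; 6; 7; 7; 9].

Lemma ety_sym x y : ety x y = ety y x.
Proof. by apply: eq_bigl => i; rewrite fe_sym. Qed.

Lemma etyE v k : k < 5 -> ety v (nb v k) = nth 0 etys k.
Proof.
move=> hk; have [E1 E2] := nb_edge v hk.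
have hk2 := sc_lt hk.
pose o1 := Ordinal (fa_lt v hk); pose o2 := Ordinal (fa_lt v hk2).
have n12 : o2 != o1.
  apply/negP => /eqP [] /(fa_inj hk2 hk) E; by have := sc_neq hk; rewrite E eqxx.
rewrite /ety (bigD1 o1) //= (bigD1 o2) /=; last by rewrite E2 n12.
rewrite big1 ?addn0.
  rewrite !fa_sz //; by case: k hk {E1 E2 hk2 o1 o2 n12} => [|[|[|[|[|]]]]].
move=> i /andP[/andP[hi n1] n2]; exfalso.
case: (edgeE (ltn_ord i) hi) => m hm [Ei [] /(nb_inj hk _) E].
  rewrite -(E hm) in Ei.
  have e : i = o1 by apply: val_inj; rewrite /= Ei.
  by rewrite e eqxx in n1.
have E' := E (pr_lt hm).
have e : i = o2 by apply: val_inj; rewrite /= Ei E' sc_pr.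
by rewrite e eqxx in n2.
Qed.


Lemma tri_pos t w y z : t < size F -> size (fc t) = 3 ->
  w \in fc t -> y \in fc t -> z \in fc t -> w != y -> w != z -> y != z ->
  exists2 m, m = 1 \/ m = 2 \/ m = 4 &
    (y = nb w (pr m) /\ z = nb w m) \/ (y = nb w m /\ z = nb w (pr m)).
Proof.
move=> ht st wt yt zt wy wz yz.
case: (fa_all ht wt) => m hm Et.
exists m.
  move: (fa_sz w hm); rewrite -Et st.
  by case: m hm {Et} => [|[|[|[|[|]]]]] //= _ _; auto.
have ey := tri_edge (fcU ht) st wt yt wy.
have ez := tri_edge (fcU ht) st wt zt wz.
have [E1 _] := nb_edge w hm; have [_ E2] := nb_edge w (pr_lt hm).
rewrite sc_pr // -Et in E2; rewrite -Et in E1.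
have ab : nb w m != nb w (pr m).
  apply/negP => /eqP/(nb_inj hm (pr_lt hm)) E; have := pr_neq hm; by rewrite -{1}E eqxx.
case: (two_nbrs (fcU ht) ab E1 E2 ey) => ey'; case: (two_nbrs (fcU ht) ab E1 E2 ez) => ez'.
- by rewrite ey' ez' eqxx in yz.
- by right.
- by left.
- by rewrite ey' ez' eqxx in yz.
Qed.

Lemma tri_ety t w y z : t < size F -> size (fc t) = 3 ->
  w \in fc t -> y \in fc t -> z \in fc t -> w != y -> w != z -> y != z ->
  [/\ [|| (ety w y == 9) && (ety w z == 6), (ety w y == 6) && (ety w z == 9),
        (ety w y == 6) && (ety w z == 7), (ety w y == 7) && (ety w z == 6),
        (ety w y == 7) && (ety w z == 9) | (ety w y == 9) && (ety w z == 7)],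
      (ety w y = 9 -> ety w z = 6 -> y = nb w 0 /\ z = nb w 1),
      (ety w y = 6 -> ety w z = 7 -> y = nb w 1 /\ z = nb w 2) &
      (ety w y = 9 -> ety w z = 7 -> y = nb w 4 /\ z = nb w 3)].
Proof.
move=> ht st wt yt zt wy wz yz.
case: (tri_pos ht st wt yt zt wy wz yz) => m Hm [] [-> ->].
all: case: Hm => [->|[->|->]]; rewrite !etyE //=.
Qed.


Lemma nb_mem1 v k : k < 5 -> nb v k \in fc (fa v k).
Proof. by move=> hk; have [E _] := nb_edge v hk; case/andP: (fe_mem E). Qed.
Lemma nb_mem2 v k : k < 5 -> nb v k \in fc (fa v (sc k)).
Proof. by move=> hk; have [_ E] := nb_edge v hk; case/andP: (fe_mem E). Qed.

Lemma G35 v : [/\ nb (nb v 0) 4 = v, nb (nb v 0) 3 = nb v 1,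
   nb (nb v 1) 1 = v & nb (nb v 1) 2 = nb v 0].
Proof.
have ht := @fa_lt v 1 isT; have st := @fa_sz v 1 isT.
have vt := @fa_in v 1 isT.
have wt := @nb_mem2 v 0 isT; have xt := @nb_mem1 v 1 isT.
have wv := @nb_ne v 0 isT; have xv := @nb_ne v 1 isT.
have wx : nb v 0 != nb v 1 by apply/negP => /eqP/(@nb_inj v 0 1 isT isT).
have vw : v != nb v 0 by rewrite eq_sym.
have vx : v != nb v 1 by rewrite eq_sym.
have xw : nb v 1 != nb v 0 by rewrite eq_sym.
case: (tri_ety ht st wt vt xt wv wx vx) => Mw _ _ Cw.
case: (tri_ety ht st xt vt wt xv xw vw) => Mx _ Cx _.
have e1 : ety (nb v 0) v = 9 by rewrite ety_sym etyE.
have e2 : ety (nb v 1) v = 6 by rewrite ety_sym etyE.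
rewrite (ety_sym (nb v 1) (nb v 0)) e2 in Mx Cx.
rewrite e1 in Mw Cw.
have e3 : ety (nb v 0) (nb v 1) = 7 by lia.
case: (Cw erefl e3) => <- <-.
by case: (Cx erefl e3) => <- <-.
Qed.

Lemma G6 v : nb (nb v 4) 0 = v /\ nb (nb v 4) 1 = nb v 3.
Proof.
have ht := @fa_lt v 4 isT; have st := @fa_sz v 4 isT.
have vt := @fa_in v 4 isT.
have zt := @nb_mem1 v 4 isT; have yt := @nb_mem2 v 3 isT.
have zv := @nb_ne v 4 isT; have yv := @nb_ne v 3 isT.
have zy : nb v 4 != nb v 3 by apply/negP => /eqP/(@nb_inj v 4 3 isT isT).
have vz : v != nb v 4 by rewrite eq_sym.
have vy : v != nb v 3 by rewrite eq_sym.
have yz : nb v 3 != nb v 4 by rewrite eq_sym.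
case: (tri_ety ht st zt vt yt zv zy vy) => Mz Cz _ _.
case: (tri_ety ht st yt vt zt yv yz vz) => My _ _ _.
have e1 : ety (nb v 4) v = 9 by rewrite ety_sym etyE.
have e2 : ety (nb v 3) v = 7 by rewrite ety_sym etyE.
rewrite (ety_sym (nb v 3) (nb v 4)) e2 in My.
rewrite e1 in Mz Cz.
have e3 : ety (nb v 4) (nb v 3) = 6 by lia.
by case: (Cz erefl e3) => <- <-.
Qed.


Lemma A_inj : injective (fun v => nb v 0).
Proof. by apply: (can_inj (g := fun v => nb v 4)) => v; case: (G35 v). Qed.
Lemma P_inj : injective (fun v => nb v 1).
Proof. by apply: (can_inj (g := fun v => nb v 1)) => v; case: (G35 v). Qed.

Definition Ap := perm A_inj.
Definition Pp := perm P_inj.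
Definition Bp := (Pp * Ap)%g.

Lemma ApE v : Ap v = nb v 0. Proof. by rewrite permE. Qed.
Lemma PpE v : Pp v = nb v 1. Proof. by rewrite permE. Qed.
Lemma ApV v : (Ap^-1)%g v = nb v 4.
Proof. by rewrite -{1}(G6 v).1 -ApE permK. Qed.
Lemma BpE v : Bp v = nb v 2.
Proof.
rewrite permM ApE PpE; have [_ _ h3 h4] := G35 (nb v 1).
by case: (G35 v) => _ _ e _; rewrite e in h4.
Qed.
Lemma BpV v : (Bp^-1)%g v = nb v 3.
Proof.
have e : Bp (nb v 3) = v.
  rewrite -(G6 v).2 permM !PpE ApE.
  by case: (G35 (nb v 4)) => _ _ -> _; case: (G6 v).
by rewrite -{1}e permK.
Qed.

Lemma fe_cyc (c : seq V) w a b : uniq c -> a != b -> face_edge c w a -> face_edge c w b ->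
  (a = next c w /\ next c b = w) \/ (next c a = w /\ b = next c w).
Proof.
move=> Uc ab ea eb; have ni := next_inj Uc.
case: (fe_nextP ea) => ha; case: (fe_nextP eb) => hb.
- by rewrite -ha -hb eqxx in ab.
- by left.
- by right.
- have e : a = b by apply: ni; rewrite ha hb.
  by rewrite e eqxx in ab.
Qed.

Lemma fa_same v w k : k = 0 \/ k = 3 -> w \in fc (fa v k) -> fa w k = fa v k.
Proof.
move=> hk wc; have hk5 : k < 5 by case: hk => ->.
case: (fa_all (fa_lt v hk5) wc) => m hm e.
have := fa_sz v hk5; rewrite e (fa_sz w hm) => sz.
suff -> : m = k by [].
by case: hk sz => ->; case: m hm {e} => [|[|[|[|[|]]]]].
Qed.

Lemma orbA v : #|porbit Ap v| = 6.
Proof.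
have hc := @fa_lt v 0 isT.
rewrite (_ : 6 = size (fc (fa v 0))); last by rewrite fa_sz.
apply: orbit_cycle; rewrite ?fa_sz ?fcU //.
  move=> w wc; rewrite ApE ApV.
  have e := fa_same (or_introl erefl) wc.
  have [E1 _] := @nb_edge w 0 isT; have [_ E2] := @nb_edge w 4 isT.
  rewrite e in E1; rewrite /= e in E2.
  apply: (fe_cyc (fcU hc) _ E1 E2).
  by apply/negP => /eqP/(@nb_inj w 0 4 isT isT).
exact: (@fa_in v 0 isT).
Qed.

Lemma orbB v : #|porbit Bp v| = 4.
Proof.
have hc := @fa_lt v 3 isT.
rewrite (_ : 4 = size (fc (fa v 3))); last by rewrite fa_sz.
apply: orbit_cycle; rewrite ?fa_sz ?fcU //.
  move=> w wc; rewrite BpE BpV.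
  have e := fa_same (or_intror erefl) wc.
  have [_ E1] := @nb_edge w 2 isT; have [E2 _] := @nb_edge w 3 isT.
  rewrite /= e in E1; rewrite e in E2.
  apply: (fe_cyc (fcU hc) _ E1 E2).
  by apply/negP => /eqP/(@nb_inj w 2 3 isT isT).
exact: (@fa_in v 3 isT).
Qed.

Lemma orbP v : #|porbit Pp v| = 2.
Proof.
apply: orbit_inv; rewrite !PpE; first exact: (@nb_ne v 1 isT).
by case: (G35 v).
Qed.


Lemma adjP v y : reflect (exists2 k, k < 5 & y = nb v k) (map_adj F v y).
Proof.
apply: (iffP hasP) => [[f fF e]|[k hk ->]].
  have hi : index f F < size F by rewrite index_mem.
  rewrite -(nth_index [::] fF) in e.
  case: (edgeE hi e) => k hk [_ [->|->]]; first by exists k.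
  by exists (pr k) => //; apply: pr_lt.
exists (fc (fa v k)); first by apply: mem_nth; apply: fa_lt.
by case: (nb_edge v hk).
Qed.

Lemma adj_sym x y : map_adj F x y = map_adj F y x.
Proof. by apply: eq_has => f; rewrite fe_sym. Qed.

Lemma adj_irr x : map_adj F x x = false.
Proof.
apply/negP => /hasP[f fF]; case: (HF fF) => U s3.
by rewrite fe_irr // ltnW.
Qed.

Lemma card_adj v : #|[set y | map_adj F v y]| = 5.
Proof.
have -> : [set y | map_adj F v y] = (fun k : 'I_5 => nb v k) @: setT.
  apply/setP => y; rewrite inE; apply/adjP/imsetP => [[k hk ->]|[k _ ->]].
    by exists (Ordinal hk).
  by exists k.
rewrite card_imset ?cardsT ?card_ord // => i j /(nb_inj (ltn_ord i) (ltn_ord j)) e.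
exact: val_inj.
Qed.

Definition Dp := [set p : V * V | map_adj F p.1 p.2].

Lemma card_Dp : #|Dp| = 5 * #|V|.
Proof.
rewrite -sum1_card.
have -> : \sum_(p in Dp) 1 = \sum_(p | predT p.1 && map_adj F p.1 p.2) 1.
  by apply: eq_bigl => p; rewrite inE.
rewrite -(pair_big_dep predT (fun x y => map_adj F x y) (fun _ _ => 1)) /=.
rewrite mulnC -sum_nat_const; apply: eq_bigr => x _.
by rewrite -(card_adj x) -sum1_card; apply: eq_bigl => y; rewrite inE.
Qed.

Lemma edges_eq : map_edges F = (fun p : V * V => [set p.1; p.2]) @: Dp.
Proof.
apply/setP => e; apply/imsetP/imsetP => [[p hp ->]|[p hp ->]]; exists p => //.
all: by move: hp; rewrite !inE.
Qed.

Lemma card_edges : #|Dp| = 2 * #|map_edges F|.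
Proof.
rewrite edges_eq -sum1_card (partition_big_imset (fun p : V * V => [set p.1; p.2])) /=.
rewrite mulnC -sum_nat_const; apply: eq_bigr => e /imsetP[[x y] hxy ->] /=.
have xy : x != y by apply/negP => /eqP exy; move: hxy; rewrite inE /= exy adj_irr.
have -> : \sum_(i in Dp | [set i.1; i.2] == [set x; y]) 1 =
          \sum_(i in [set (x, y); (y, x)]) 1.
  apply: eq_bigl => [[a b]]; rewrite !inE /=.
  apply/idP/idP => [/andP[hab /eqP E]|/orP[] /eqP [-> ->]].
  - have ha : a \in [set x; y] by rewrite -E set21.
    have hb : b \in [set x; y] by rewrite -E set22.
    move: ha hb; rewrite !inE => /orP[] /eqP ha /orP[] /eqP hb; subst.
    + by rewrite adj_irr in hab.
    + by rewrite eqxx.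
    + by rewrite eqxx orbT.
    + by rewrite adj_irr in hab.
  - by move: hxy; rewrite inE /= => ->; rewrite eqxx.
  - move: hxy; rewrite inE /= adj_sym => ->; by rewrite setUC eqxx.
rewrite sum1_card cards2; case: eqP => // -[e1 _].
by rewrite e1 eqxx in xy.
Qed.


Definition wt (n : nat) := 12 %/ n.

Lemma wt_face i : i < size F -> wt (size (fc i)) * size (fc i) = 12.
Proof.
move=> hi; have [_ s3] := fcP hi.
have : exists w, w \in fc i by case: (fc i) s3 => // w ? _; exists w; rewrite inE eqxx.
case=> w wi; case: (fa_all hi wi) => m hm ->; rewrite fa_sz //.
by case: m hm {wi} => [|[|[|[|[|]]]]].
Qed.

Lemma vsum w : \sum_(i < size F | w \in fc i) wt (size (fc i)) = 17.
Proof.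
pose fo (k : 'I_5) : 'I_(size F) := Ordinal (fa_lt w (ltn_ord k)).
have E : [set i : 'I_(size F) | w \in fc i] = fo @: setT.
  apply/setP => i; rewrite inE; apply/idP/imsetP => [wi|[k _ ->]].
    case: (fa_all (ltn_ord i) wi) => k hk e; exists (Ordinal hk) => //.
    by apply: val_inj.
  exact: (fa_in w (ltn_ord k)).
rewrite (eq_bigl (fun i => i \in fo @: setT)) => [|i]; last by rewrite -E inE.
rewrite big_imset /=; last by move=> a b _ _ [] /(fa_inj (ltn_ord a) (ltn_ord b)) e; apply: val_inj.
rewrite (eq_bigl predT) => [|k]; last by rewrite inE.
rewrite (eq_bigr (fun k : 'I_5 => wt (nth 0 szs k))) => [|k _]; last by rewrite fa_sz.
by rewrite !big_ord_recl big_ord0.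
Qed.

Lemma card_faces : 12 * size F = 17 * #|V|.
Proof.
transitivity (\sum_(i < size F) wt (size (fc i)) * size (fc i)).
  rewrite (eq_bigr (fun _ => 12)) => [|i _]; last by rewrite wt_face.
  by rewrite sum_nat_const card_ord mulnC.
transitivity (\sum_(i < size F) \sum_(w : V | w \in fc i) wt (size (fc i))).
  apply: eq_bigr => i _; rewrite sum_nat_const mulnC; congr (_ * _).
  by apply/esym/card_uniqP/fcU.
rewrite (exchange_big_dep predT) //=.
rewrite mulnC -sum_nat_const; apply: eq_bigr => w _.
exact: vsum.
Qed.


Lemma main_contra : euler_char F = (-1)%R -> False.
Proof.
move=> he.
have hE := card_edges; have hD := card_Dp; have hF := card_faces.
have hn : #|V| = 12 by rewrite /euler_char in he; lia.
have oA := odd_perm_const (ltn0Sn 5) orbA.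
have oB := odd_perm_const (ltn0Sn 3) orbB.
have oP := odd_perm_const (ltn0Sn 1) orbP.
rewrite hn /= in oA oB oP.
move: oB; rewrite /Bp odd_permM oA oP.
by [].
Qed.

End Main.

Unset Implicit Arguments.
Set Strict Implicit.

Theorem lemma4p2 (V : finType) (F : seq (seq V)) :
  semi_equivelar_map F [:: 3; 3; 4; 3; 6] -> euler_char F <> (-1)%R.
Proof. by case=> HF _ Hcnt _ Hcyc; exact: (@main_contra V F HF Hcnt Hcyc). Qed.
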